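(* In a finite dynamic game as described in the context, suppose $K^i$ is unilaterally sufficient information for player $i$, with associated functions $F_t^{i,g^i}$. Let $g=(g^j)_{j\in\mathcal{I}}$ be a fully mixed behavioral strategy profile and let $\rho^i$ be the $K^i$-based strategy $$\rho_t^i(u_t^i\mid k_t^i)=\sum_{\tilde h_t^i}g_t^i(u_t^i\mid\tilde h_t^i)\,F_t^{i,g^i}(\tilde h_t^i\mid k_t^i).$$ Then for every $j\in\mathcal{I}\setminus\{i\}$ and all $h_t^j\in\mathcal{H}_t^j$, $u_t^j\in\mathcal{U}_t^j$ (for which the conditional quantities are defined): (1) $\Pr^g(\tilde h_{t+1}^j\mid h_t^j,u_t^j)=\Pr^{\rho^i,g^{-i}}(\tilde h_{t+1}^j\mid h_t^j,u_t^j)$ for all $t<T$ and all $\tilde h_{t+1}^j$; and (2) $\mathbb{E}^g[R_t^j\mid h_t^j,u_t^j]=\mathbb{E}^{\rho^i,g^{-i}}[R_t^j\mid h_t^j,u_t^j]$ for all $t$.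
   Context: Game model: finite set of players $\mathcal{I}$, times $\mathcal{T}=\{1,\dots,T\}$. At time $t$ each player $i$ takes action $U_t^i\in\mathcal{U}_t^i$, obtains reward $R_t^i\in[-1,1]$ and learns new information $Z_t^i\in\mathcal{Z}_t^i$. There is a state $X_t\in\mathcal{X}_t$ with $(X_{t+1},Z_t,R_t)=f_t(X_t,U_t,W_t)$ for fixed functions $f_t$. Primitive random variables $(X_1,H_1)$ and $W_1,\dots,W_T$ are mutually independent with commonly known distributions. All sets are finite. Perfect recall: $H_t^i=(H_1^i,Z_{1:t-1}^i)\in\mathcal{H}_t^i$, and $U_t^i$ is a component of $Z_t^i$. Behavioral strategy $g_t^i:\mathcal{H}_t^i\to\Delta(\mathcal{U}_t^i)$; a profile is fully mixed if every action has positive probability at every history. A realization is admissible under $g$ if it has positive probability under $g$. Compression: $K_1^i=\iota_1^i(H_1^i)$, $K_t^i=\iota_t^i(K_{t-1}^i,Z_{t-1}^i)$ for fixed maps, finite value sets $\mathcal{K}_t^i$; $k_t^i$ is the compression of $h_t^i$; a $K^i$-based strategy has $\rho_t^i:\mathcal{K}_t^i\to\Delta(\mathcal{U}_t^i)$. Unilaterally sufficient information (USI): $K^i$ is USI for player $i$ if there exist $F_t^{i,g^i}:\mathcal{K}_t^i\to\Delta(\mathcal{H}_t^i)$ depending only on $g^i$ and $\Phi_t^{i,g^{-i}}:\mathcal{K}_t^i\to\Delta(\mathcal{X}_t\times\mathcal{H}_t^{-i})$ depending only on $g^{-i}$ with $\Pr^g(x_t,h_t\mid k_t^i)=F_t^{i,g^i}(h_t^i\mid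 k_t^i)\Phi_t^{i,g^{-i}}(x_t,h_t^{-i}\mid k_t^i)$ for all behavioral profiles $g$, all $t$, all $k_t^i$ admissible under $g$ (with $x_t,h_t^i,h_t^{-i}$ ranging independently; the left side is $0$ if they disagree on shared components). *)

(* Defs.v *)
From HB Require Import structures.
From mathcomp Require Import all_boot all_order all_algebra.
Set Implicit Arguments. Unset Strict Implicit. Unset Printing Implicit Defensive.
Import Order.TTheory GRing.Theory Num.Theory.
Local Open Scope ring_scope.

(* Time is indexed from 0: paper time t = 1..T corresponds to t = 0..T-1 here. *)
Record game (R : realFieldType) := Game {
  Pl : finType;
  Tm : nat;
  X : nat -> finType;
  U : Pl -> nat -> finType;
  Z : Pl -> nat -> finType;
  W : nat -> finType;
  H1 : Pl -> finType;
  (* (X_{t+1}, Z_t, R_t) = f_t(X_t, U_t, W_t) *)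
  dyn : forall t, X t -> {dffun forall i : Pl, U i t} -> W t ->
          (X t.+1 * {dffun forall i : Pl, Z i t} * {ffun Pl -> R})%type;
  P1 : X 0 -> {dffun forall i : Pl, H1 i} -> R;
  PW : forall t, W t -> R;
  act_of : forall i t, Z i t -> U i t             (* U_t^i is a component of Z_t^i *)
}.

Arguments Pl {R} g. Arguments Tm {R} g. Arguments X {R} g t. Arguments U {R} g i t.
Arguments Z {R} g i t. Arguments W {R} g t. Arguments H1 {R} g i.
Arguments dyn {R} g {t}. Arguments P1 {R} g. Arguments PW {R} g {t}.
Arguments act_of {R} g {i t}.

Section Game.
Variable (R : realFieldType) (G : game R).

Definition is_dist (S : finType) (p : S -> R) :=
  (forall s, 0 <= p s) /\ \sum_(s : S) p s = 1.

Definition valid_game :=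
  [/\ is_dist (fun xh : (X G 0 * {dffun forall i : Pl G, H1 G i})%type => P1 G xh.1 xh.2),
      (forall t, is_dist (@PW R G t)),
      (forall t (x : X G t) u w, forall i : Pl G, act_of G ((dyn G x u w).1.2 i) = u i) &
      (forall t x u w, forall i : Pl G, -1 <= (dyn G (t:=t) x u w).2 i <= 1)].

(* Perfect recall: H_t^i = (H_1^i, Z_{1:t-1}^i), built as nested pairs. *)
Fixpoint Hist (i : Pl G) (t : nat) : finType :=
  match t with 0 => H1 G i | t'.+1 => (Hist i t' * Z G i t')%type : finType end.

Definition JH t := {dffun forall i : Pl G, Hist i t}.
Definition JU t := {dffun forall i : Pl G, U G i t}.

Definition next_hist t (h : JH t) (z : {dffun forall i : Pl G, Z G i t}) : JH t.+1 :=
  [ffun j => ((h j, z j) : Hist j t.+1)].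

Definition strat (i : Pl G) := forall t, Hist i t -> U G i t -> R.
Definition profile := forall i : Pl G, strat i.

Definition behavioral i (s : strat i) := forall t (h : Hist i t), is_dist (s t h).
Definition behavioral_profile (g : profile) := forall i, behavioral (g i).
Definition fully_mixed (g : profile) :=
  behavioral_profile g /\ forall i t (h : Hist i t) u, 0 < g i t h u.

Fixpoint Pxh (g : profile) (t : nat) : X G t -> JH t -> R :=
  match t return X G t -> JH t -> R with
  | 0 => fun x h => P1 G x h
  | t'.+1 => fun x' h' =>
     \sum_(x : X G t') \sum_(h : JH t') \sum_(u : JU t') \sum_(w : W G t')
       (Pxh g x h * (\prod_(j : Pl G) g j t' (h j) (u j)) * PW G w) *
       ((((dyn G x u w).1.1 == x') && (next_hist h (dyn G x u w).1.2 == h')) %:R)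
  end.

Definition Q (g : profile) t (x : X G t) (h : JH t) (u : JU t) (w : W G t) : R :=
  Pxh g x h * (\prod_(j : Pl G) g j t (h j) (u j)) * PW G w.

Definition Pr_hu (g : profile) t j (hj : Hist j t) (uj : U G j t) : R :=
  \sum_(x : X G t) \sum_(h : JH t) \sum_(u : JU t) \sum_(w : W G t)
    Q g x h u w * ((h j == hj) && (u j == uj))%:R.

Definition Pr_next_hu (g : profile) t j (hj : Hist j t) (uj : U G j t)
    (hj' : Hist j t.+1) : R :=
  \sum_(x : X G t) \sum_(h : JH t) \sum_(u : JU t) \sum_(w : W G t)
    Q g x h u w * [&& h j == hj, u j == uj &
                      ((h j, (dyn G x u w).1.2 j) : Hist j t.+1) == hj']%:R.

Definition cond_next (g : profile) t (j : Pl G) (hj : Hist j t) (uj : U G j t)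
    (hj' : Hist j t.+1) : R :=
  Pr_next_hu g hj uj hj' / Pr_hu g (t:=t) hj uj.

Definition cond_reward (g : profile) t j (hj : Hist j t) (uj : U G j t) : R :=
  (\sum_(x : X G t) \sum_(h : JH t) \sum_(u : JU t) \sum_(w : W G t)
    Q g x h u w * ((h j == hj) && (u j == uj))%:R * (dyn G x u w).2 j)
  / Pr_hu g hj uj.

Section Compression.
Variables (i : Pl G) (K : nat -> finType)
          (iota1 : H1 G i -> K 0) (iota : forall t, K t -> Z G i t -> K t.+1).

Fixpoint compress (t : nat) : Hist i t -> K t :=
  match t return Hist i t -> K t with
  | 0 => fun h => iota1 h
  | t'.+1 => fun h => iota (compress h.1) h.2
  end.

Definition Pr_k (g : profile) t (k : K t) : R :=
  \sum_(x : X G t) \sum_(h : JH t) Pxh g x h * (compress (h i) == k)%:R.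

Definition cond_xh_k (g : profile) t (k : K t) (x : X G t) (h : JH t) : R :=
  Pxh g x h * (compress (h i) == k)%:R / Pr_k g k.

(* F : depends only on g^i (it takes only player i's strategy);
   Phi : takes the profile but must not depend on g^i, and takes the joint
   history but must only depend on the components h^{-i}. *)
Definition USI
    (F : strat i -> forall t, K t -> Hist i t -> R)
    (Phi : profile -> forall t, K t -> X G t -> JH t -> R) :=
  [/\ (forall gi, behavioral gi -> forall t (k : K t), is_dist (F gi t k)),
      (forall g, behavioral_profile g -> forall t (k : K t) (hi0 : Hist i t),
          (forall x h, 0 <= Phi g t k x h) /\
          \sum_(x : X G t) \sum_(h : JH t) Phi g t k x h * (h i == hi0)%:R = 1),
      (forall g g' : profile, (forall j, j != i -> g j = g' j) -> Phi g = Phi g'),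
      (forall g t (k : K t) x (h h' : JH t), (forall j, j != i -> h j = h' j) ->
          Phi g t k x h = Phi g t k x h') &
      (forall g, behavioral_profile g -> forall t, (t < Tm G)%N ->
        forall k : K t, 0 < Pr_k g k ->
        forall x (h : JH t), cond_xh_k g k x h = F (g i) t k (h i) * Phi g t k x h)].

Definition rho (F : strat i -> forall t, K t -> Hist i t -> R) (gi : strat i) :
    strat i :=
  fun t h u => \sum_(h' : Hist i t) gi t h' u * F gi t (compress h) h'.

End Compression.
End Game.

(* Main.v *)
Require Import Defs.
From HB Require Import structures.
From mathcomp Require Import all_boot all_order all_algebra all_fingroup.
From mathcomp Require Import ring.
Import Order.TTheory GRing.Theory Num.Theory.
Unset Printing Implicit Defensive.
Local Open Scope ring_scope.

Section Gen.
Variable R : realFieldType.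

Lemma ind_and (a b : bool) : ((a && b)%:R : R) = a%:R * b%:R.
Proof. by case: a; case: b; rewrite ?mul1r ?mul0r. Qed.

Lemma sum_ind (T : finType) (a : T) (f : T -> R) :
  \sum_(x : T) (a == x)%:R * f x = f a.
Proof.
rewrite (bigD1 a) //= eqxx mul1r big1 ?addr0 // => x /negbTE.
by rewrite eq_sym => ->; rewrite mul0r.
Qed.

Lemma sum4 (A B C D : finType) (f : A -> B -> C -> D -> R) :
  \sum_a \sum_b \sum_c \sum_d f a b c d =
  \sum_(p : A * (B * C * D)) f p.1 p.2.1.1 p.2.1.2 p.2.2.
Proof.
have E1 : forall a, \sum_b \sum_c \sum_d f a b c d = \sum_(q : B * C * D) f a q.1.1 q.1.2 q.2.
  by move=> a; rewrite pair_big /=; rewrite pair_big /=.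
by rewrite (eq_bigr _ (fun a _ => E1 a)) pair_big.
Qed.
End Gen.
Arguments ind_and {R}.
Arguments sum_ind {R T}.
Arguments sum4 {R A B C D}.

Section Main.
Variables (R : realFieldType) (G : game R) (i : Pl G)
    (K : nat -> finType) (iota1 : H1 G i -> K 0)
    (iota : forall t, K t -> Z G i t -> K t.+1)
    (F : strat i -> forall t, K t -> Hist i t -> R)
    (Phi : profile G -> forall t, K t -> X G t -> JH G t -> R)
    (g : profile G).
Let c {t} (y : Hist i t) : K t := compress iota1 iota y.
Let g' : profile G := dfwith g (rho iota1 iota F (g i)).
Hypotheses (HV : valid_game G) (HU : USI iota1 iota F Phi) (HF : fully_mixed g).


Lemma g'_in : g' i = rho iota1 iota F (g i).
Proof. by rewrite /g' dfwith_in. Qed.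
Lemma g'_out j : j != i -> g' j = g j.
Proof. by move=> ne; rewrite /g' dfwith_out // eq_sym. Qed.

Lemma g_beh : behavioral_profile g.
Proof. by case: HF. Qed.

Lemma Pxh_ge0 {t} x h : 0 <= Pxh g (t:=t) x h.
Proof.
elim: t x h => [|t IH] x h /=.
  by case: HV => [[P0 _] _ _ _]; exact: (P0 (x, h)).
apply: sumr_ge0 => x0 _; apply: sumr_ge0 => h0 _; apply: sumr_ge0 => u _; apply: sumr_ge0 => w _.
apply: mulr_ge0; last by apply: ler0n.
apply: mulr_ge0; last by case: HV => [_ PW0 _ _]; case: (PW0 t).
apply: mulr_ge0 => //; apply: prodr_ge0 => j _.
by case: (g_beh j t (h0 j)) => ->.
Qed.

Definition upd {t} (h : JH G t) (y : Hist i t) : JH G t :=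
  [ffun j => @dfwith _ (fun j => Hist j t) (fun j => h j) i y j].

Lemma upd_in {t} (h : JH G t) y : upd h y i = y.
Proof. by rewrite /upd ffunE dfwith_in. Qed.
Lemma upd_out {t} (h : JH G t) y j : j != i -> upd h y j = h j.
Proof. by move=> ne; rewrite /upd ffunE dfwith_out // eq_sym. Qed.

Definition offi {t} (b : JH G t -> R) :=
  forall h h' : JH G t, (forall j, j != i -> h j = h' j) -> b h = b h'.

Lemma split_sum t (a : Hist i t -> R) (b : JH G t -> R) y0 : offi b ->
  \sum_(h : JH G t) a (h i) * b h = (\sum_y a y) * \sum_(h : JH G t) (h i == y0)%:R * b h.
Proof.
move=> Hb.
transitivity (\sum_(h : JH G t) \sum_y (h i == y)%:R * (a y * b h)).
  by apply: eq_bigr => h _; rewrite sum_ind.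
rewrite exchange_big mulr_suml; apply: eq_bigr => y _ /=.
rewrite mulr_sumr.
pose sig (h : JH G t) := upd h (tperm y y0 (h i)).
have sigK : involutive sig.
  move=> h; apply/ffunP => j; rewrite /sig.
  case: (eqVneq j i) => [->|ne]; first by rewrite !upd_in tpermK.
  by rewrite !upd_out.
rewrite (reindex_inj (can_inj sigK)) /=; apply: eq_bigr => h _.
rewrite /sig upd_in (Hb (upd h _) h); last by move=> j ne; rewrite upd_out.
have -> : (tperm y y0 (h i) == y) = (h i == y0).
  by rewrite -{2}(tpermR y y0) (can_eq (tpermK y y0)).
by rewrite mulrCA.
Qed.

Definition okf {t} (B : X G t -> JH G t -> R) :=
  forall x (h h' : JH G t), (forall j, j != i -> h j = h' j) ->
    c (h i) = c (h' i) -> B x h = B x h'.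

Lemma key t : (t < Tm G)%N -> forall (v : U G i t) (B : X G t -> JH G t -> R), okf B ->
  \sum_x \sum_(h : JH G t) Pxh g x h * g i t (h i) v * B x h =
  \sum_x \sum_(h : JH G t) Pxh g x h * rho iota1 iota F (g i) (h i) v * B x h.
Proof.
move=> ltT v B HB.
case: HU => [HFd HPhi _ HPhih Hfac].
have decomp : forall f : X G t -> JH G t -> R, \sum_x \sum_(h : JH G t) f x h =
    \sum_(k : K t) \sum_x \sum_(h : JH G t) (c (h i) == k)%:R * f x h.
  move=> f; symmetry; rewrite exchange_big; apply: eq_bigr => x _.
  rewrite exchange_big; apply: eq_bigr => h _ /=.
  exact: (sum_ind (c (h i)) (fun _ => f x h)).
rewrite decomp [RHS]decomp; apply: eq_bigr => k _.
set Pk := Pr_k iota1 iota g k.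
have Pk0 : 0 <= Pk.
  apply: sumr_ge0 => x _; apply: sumr_ge0 => h _; apply: mulr_ge0 => //; exact: Pxh_ge0.
have [Pk_eq|Pk_pos] : Pk = 0 \/ 0 < Pk.
  by rewrite le0r in Pk0; case/orP: Pk0 => [/eqP|]; auto.
  have Z : forall x h, Pxh g x h * (c (h i) == k)%:R = 0.
    move=> x h.
    have Zx := psumr_eq0P (fun x _ => sumr_ge0 _ (fun h _ => mulr_ge0 (Pxh_ge0 x h) (ler0n _ _))) Pk_eq.
    have := Zx x isT.
    move/psumr_eq0P; apply => //.
    by move=> h0 _; apply: mulr_ge0 => //; exact: Pxh_ge0.
  rewrite !big1 // => x _; rewrite big1 // => h _;
  by rewrite !mulrA (mulrC _ (Pxh g x h)) Z !mul0r.
have gb := g_beh.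
have Fac : forall x (h : JH G t), (c (h i) == k)%:R * Pxh g x h = Pk * (F (g i) t k (h i) * Phi g t k x h).
  move=> x h; have := Hfac g gb t ltT k Pk_pos x h; rewrite /cond_xh_k => <-.
  by rewrite mulrC [in RHS]mulrC mulfVK ?(lt0r_neq0 Pk_pos).
have Sum1 : \sum_y F (g i) t k y = 1 by case: (HFd (g i) (gb i) t k).
have Sup : forall y, c y != k -> F (g i) t k y = 0.
  move=> y ne.
  have [_ N1] := HPhi g gb t k y.
  have E0 : forall x (h : JH G t), h i = y -> F (g i) t k y * Phi g t k x h = 0.
    move=> x h hy; apply: (mulfI (lt0r_neq0 Pk_pos)).
    by rewrite mulr0 -hy -Fac hy (negbTE ne) mul0r.
  rewrite -[LHS]mulr1 -N1 mulr_sumr big1 // => x _; rewrite mulr_sumr big1 // => h _.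
  rewrite mulrA; case: (eqVneq (h i) y) => [hy|hne]; first by rewrite (E0 x h) // mul0r.
  by rewrite mulr0.
have [y0 Fy0] : exists y0, F (g i) t k y0 != 0.
  case: (pickP (fun y => F (g i) t k y != 0)) => [y0 Hy|Hn]; first by exists y0.
  have : \sum_y F (g i) t k y = 0 by apply: big1 => y _; move: (Hn y) => /negbFE/eqP.
  by rewrite Sum1 => /eqP; rewrite oner_eq0.
have cy0 : c y0 = k by apply/eqP; apply: contraNT Fy0 => /Sup ->.
set r := \sum_y g i t y v * F (g i) t k y.
have Frho : forall y, F (g i) t k y * rho iota1 iota F (g i) y v = F (g i) t k y * r.
  move=> y; case: (eqVneq (c y) k) => [cyk|ne]; last by rewrite Sup // !mul0r.
  have cyk' : compress iota1 iota y = k := cyk.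
  by rewrite /rho cyk'.
have EB : forall x (h : JH G t), F (g i) t k (h i) * B x h = F (g i) t k (h i) * B x (upd h y0).
  move=> x h; case: (eqVneq (c (h i)) k) => [chk|ne]; last by rewrite Sup // !mul0r.
  congr (_ * _); apply: HB; first by move=> j ne; rewrite upd_out.
  by rewrite upd_in chk cy0.
have T : forall (a : Hist i t -> R) x (h : JH G t),
    (c (h i) == k)%:R * (Pxh g x h * a (h i) * B x h) =
    Pk * ((F (g i) t k (h i) * a (h i)) * (Phi g t k x h * B x (upd h y0))).
  move=> a x h; rewrite !mulrA Fac.
  have e := EB x h.
  transitivity (Pk * Phi g t k x h * a (h i) * (F (g i) t k (h i) * B x h)); first by ring.
  by rewrite e; ring.
have offb : forall x, offi (fun h => Phi g t k x h * B x (upd h y0)).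
  move=> x h h' eq; rewrite (HPhih g t k x h h' eq); congr (_ * B x _).
  apply/ffunP => j; case: (eqVneq j i) => [->|ne]; first by rewrite !upd_in.
  by rewrite !upd_out // eq.
have L : forall (a : Hist i t -> R),
    \sum_x \sum_(h : JH G t) (c (h i) == k)%:R * (Pxh g x h * a (h i) * B x h) =
    Pk * (\sum_y F (g i) t k y * a y) *
      \sum_x \sum_(h : JH G t) (h i == y0)%:R * (Phi g t k x h * B x (upd h y0)).
  move=> a; rewrite -mulrA [in RHS]mulr_sumr [in RHS]mulr_sumr; apply: eq_bigr => x _.
  rewrite (eq_bigr _ (fun h _ => T a x h)) -mulr_sumr.
  by have := split_sum t (fun y => F (g i) t k y * a y) _ y0 (offb x); rewrite /= => ->.
have := L (fun y => g i t y v); rewrite /= => ->.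
have := L (fun y => rho iota1 iota F (g i) y v); rewrite /= => ->.
congr (_ * _ * _).
rewrite (eq_bigr _ (fun y _ => Frho y)) -mulr_suml Sum1 mul1r /r.
by apply: eq_bigr => y _; rewrite mulrC.
Qed.

Definition Inv t := forall phi : X G t -> JH G t -> R, okf phi ->
  \sum_x \sum_(h : JH G t) Pxh g x h * phi x h =
  \sum_x \sum_(h : JH G t) Pxh g' x h * phi x h.

Lemma swap4 t (f : X G t -> JH G t -> JU G t -> W G t -> R) :
  \sum_x \sum_(h : JH G t) \sum_(u : JU G t) \sum_(w : W G t) f x h u w =
  \sum_(u : JU G t) \sum_(w : W G t) \sum_x \sum_(h : JH G t) f x h u w.
Proof.
transitivity (\sum_x \sum_(u : JU G t) \sum_(w : W G t) \sum_(h : JH G t) f x h u w).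
  apply: eq_bigr => x _; rewrite exchange_big; apply: eq_bigr => u _; exact: exchange_big.
rewrite exchange_big; apply: eq_bigr => u _; exact: exchange_big.
Qed.

Lemma Slem t : (t < Tm G)%N -> Inv t ->
  forall psi : X G t -> JH G t -> JU G t -> W G t -> R,
  (forall u w, okf (fun x h => psi x h u w)) ->
  \sum_x \sum_(h : JH G t) \sum_(u : JU G t) \sum_(w : W G t) Q g x h u w * psi x h u w =
  \sum_x \sum_(h : JH G t) \sum_(u : JU G t) \sum_(w : W G t) Q g' x h u w * psi x h u w.
Proof.
move=> ltT I psi Hpsi.
rewrite !swap4; apply: eq_bigr => u _; apply: eq_bigr => w _.
pose Bu x (h : JH G t) := (\prod_(j | j != i) g j t (h j) (u j)) * PW G w * psi x h u w.
have okBu : okf Bu.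
  move=> x h h' he ce; rewrite /Bu (Hpsi u w x h h' he ce); congr (_ * _ * _).
  by apply: eq_bigr => j ne; rewrite he.
have okphi : okf (fun x (h : JH G t) => rho iota1 iota F (g i) (h i) (u i) * Bu x h).
  move=> x h h' he ce; rewrite /= (okBu x h h' he ce) /rho.
  have ce' : compress iota1 iota (h i) = compress iota1 iota (h' i) := ce.
  by rewrite ce'.
transitivity (\sum_x \sum_(h : JH G t) Pxh g x h * g i t (h i) (u i) * Bu x h).
  apply: eq_bigr => x _; apply: eq_bigr => h _.
  by rewrite /Q (bigD1 i) //= /Bu; ring.
transitivity (\sum_x \sum_(h : JH G t) Pxh g' x h * (rho iota1 iota F (g i) (h i) (u i) * Bu x h)); last first.
  apply: eq_bigr => x _; apply: eq_bigr => h _.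
  rewrite /Q (bigD1 i) //= g'_in.
  rewrite (eq_bigr (fun j => g j t (h j) (u j))) => [|j ne]; last by rewrite g'_out.
  by rewrite /Bu; ring.
rewrite (@key t ltT (u i) Bu okBu).
have := I _ okphi; rewrite /= => <-.
by apply: eq_bigr => x _; apply: eq_bigr => h _; rewrite mulrA.
Qed.

Lemma step_sum (g0 : profile G) t (phi : X G t.+1 -> JH G t.+1 -> R) :
  \sum_x' \sum_(h' : JH G t.+1) Pxh g0 x' h' * phi x' h' =
  \sum_x \sum_(h : JH G t) \sum_(u : JU G t) \sum_(w : W G t)
     Q g0 x h u w * phi (dyn G x u w).1.1 (next_hist h (dyn G x u w).1.2).
Proof.
pose T x (h : JH G t) (u : JU G t) (w : W G t) x' (h' : JH G t.+1) :=
  Q g0 x h u w * (((dyn G x u w).1.1 == x') && (next_hist h (dyn G x u w).1.2 == h'))%:R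
    * phi x' h'.
transitivity (\sum_x' \sum_(h' : JH G t.+1) \sum_x \sum_(h : JH G t) \sum_(u : JU G t)
   \sum_(w : W G t) T x h u w x' h').
  apply: eq_bigr => x' _; apply: eq_bigr => h' _.
  rewrite /= mulr_suml; apply: eq_bigr => x _; rewrite mulr_suml; apply: eq_bigr => h _.
  by rewrite mulr_suml; apply: eq_bigr => u _; rewrite mulr_suml.
transitivity (\sum_x \sum_(h : JH G t) \sum_(u : JU G t) \sum_(w : W G t)
   \sum_x' \sum_(h' : JH G t.+1) T x h u w x' h'); last first.
  apply: eq_bigr => x _; apply: eq_bigr => h _; apply: eq_bigr => u _; apply: eq_bigr => w _.
  transitivity (\sum_x' ((dyn G x u w).1.1 == x')%:R * \sum_(h' : JH G t.+1)
      (next_hist h (dyn G x u w).1.2 == h')%:R * (Q g0 x h u w * phi x' h')).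
    apply: eq_bigr => x' _; rewrite mulr_sumr; apply: eq_bigr => h' _.
    by rewrite /T ind_and; ring.
  by rewrite sum_ind sum_ind.
rewrite [RHS]sum4.
transitivity (\sum_x' \sum_(h' : JH G t.+1) \sum_(p : X G t * (JH G t * JU G t * W G t))
   T p.1 p.2.1.1 p.2.1.2 p.2.2 x' h').
  by apply: eq_bigr => x' _; apply: eq_bigr => h' _; rewrite sum4.
transitivity (\sum_x' \sum_(p : X G t * (JH G t * JU G t * W G t)) \sum_(h' : JH G t.+1)
   T p.1 p.2.1.1 p.2.1.2 p.2.2 x' h').
  by apply: eq_bigr => x' _; rewrite exchange_big.
by rewrite exchange_big.
Qed.

Lemma Inv_all t : (t <= Tm G)%N -> Inv t.
Proof.
elim: t => [_|t IH lt] phi okp; first by [].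
have ltT : (t < Tm G)%N by [].
rewrite !step_sum.
apply: (@Slem t ltT (IH (ltnW ltT))) => u w x h h' he ce /=.
apply: okp; first by move=> j ne; rewrite !ffunE he.
rewrite !ffunE.
have ce' : compress iota1 iota (h i) = compress iota1 iota (h' i) := ce.
by rewrite /c /= ce'.
Qed.

Lemma final j : j != i ->
    (forall t (hj : Hist j t) (uj : U G j t) (hj' : Hist j t.+1),
       (t.+1 < Tm G)%N -> cond_next g hj uj hj' = cond_next g' hj uj hj')
    /\
    (forall t (hj : Hist j t) (uj : U G j t),
       (t < Tm G)%N -> cond_reward g hj uj = cond_reward g' hj uj).
Proof.
move=> nji.
have PH : forall t (hj : Hist j t) (uj : U G j t), (t < Tm G)%N -> Pr_hu g hj uj = Pr_hu g' hj uj.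
  move=> t hj uj ltT; rewrite /Pr_hu.
  apply: (@Slem t ltT (@Inv_all t (ltnW ltT))) => u w x h h' he ce.
  by rewrite /= he.
split.
  move=> t hj uj hj' ltT1; have ltT : (t < Tm G)%N by apply: ltnW.
  rewrite /cond_next PH //; congr (_ / _).
  rewrite /Pr_next_hu.
  apply: (@Slem t ltT (@Inv_all t (ltnW ltT))) => u w x h h' he ce.
  by rewrite /= he.
move=> t hj uj ltT.
rewrite /cond_reward PH //; congr (_ / _).
transitivity (\sum_x \sum_(h : JH G t) \sum_(u : JU G t) \sum_(w : W G t)
    Q g x h u w * (((h j == hj) && (u j == uj))%:R * (dyn G x u w).2 j)).
  by apply: eq_bigr => x _; apply: eq_bigr => h _; apply: eq_bigr => u _;
     apply: eq_bigr => w _; rewrite mulrA.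
transitivity (\sum_x \sum_(h : JH G t) \sum_(u : JU G t) \sum_(w : W G t)
    Q g' x h u w * (((h j == hj) && (u j == uj))%:R * (dyn G x u w).2 j)); last first.
  by apply: eq_bigr => x _; apply: eq_bigr => h _; apply: eq_bigr => u _;
     apply: eq_bigr => w _; rewrite mulrA.
apply: (@Slem t ltT (@Inv_all t (ltnW ltT))) => u w x h h' he ce.
by rewrite /= he.
Qed.
End Main.

Theorem lemma9 (R : realFieldType) (G : game R) (i : Pl G)
    (K : nat -> finType) (iota1 : H1 G i -> K 0)
    (iota : forall t, K t -> Z G i t -> K t.+1)
    (F : strat i -> forall t, K t -> Hist i t -> R)
    (Phi : profile G -> forall t, K t -> X G t -> JH G t -> R)
    (g : profile G) :
  valid_game G ->
  USI iota1 iota F Phi ->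
  fully_mixed g ->
  let g' := dfwith g (rho iota1 iota F (g i)) in
  forall j : Pl G, j != i ->
    (forall t (hj : Hist j t) (uj : U G j t) (hj' : Hist j t.+1),
       (t.+1 < Tm G)%N -> 0 < Pr_hu g hj uj -> 0 < Pr_hu g' hj uj ->
       cond_next g hj uj hj' = cond_next g' hj uj hj')
    /\
    (forall t (hj : Hist j t) (uj : U G j t),
       (t < Tm G)%N -> 0 < Pr_hu g hj uj -> 0 < Pr_hu g' hj uj ->
       cond_reward g hj uj = cond_reward g' hj uj).
Proof.
move=> HV HU HF g' j nji.
have [A B] := @final R G i K iota1 iota F Phi g HV HU HF j nji.
by split=> [t hj uj hj' lt _ _|t hj uj lt _ _]; [apply: A | apply: B].
Qed.
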